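(* Let $n \ge 1$ and let $v_1,\dots,v_n > 0$. Consider the tit-for-tat dynamic on players $N=\{1,\dots,n\}$ with values $v_1,\dots,v_n$, started from a non-degenerate configuration: $x_i(0)>0$ for all $i$, and $y_{i,j}(0)>0$ for all $i,j$ with $\sum_{j=1}^n y_{i,j}(0)=1$ for each $i$. Let $v^* = \max_{k\in[n]} v_k$. Let $i$ be any player and $j$ any player with $v_j < v^*$. Then $\lim_{t\to\infty} y_{i,j}(t) = 0$.
   Context: Tit-for-tat dynamic: there are $n$ players; player $i$ produces good $i$, and each unit of good $j$ used as input by any player yields $v_j$ units of that player's own good. At time $t$, player $i$ holds an amount $x_i(t)$ of good $i$ and allocates it according to fractions $y_{i,j}(t)\ge 0$, $\sum_j y_{i,j}(t)=1$ ($y_{i,j}(t)$ is the fraction of good $i$ given to player $j$). At each time $t$: (Exchange) every player $i$ receives $w_{i,j}(t) = y_{j,i}(t)\, x_j(t)$ units of each good $j$; (Production) $x_i(t+1) = \sum_{j=1}^n v_j\, w_{i,j}(t)$; (Fractions update) $y_{i,j}(t+1) = \dfrac{v_j\, w_{i,j}(t)}{x_i(t+1)}$. *)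

(* Defs.v *)
From HB Require Import structures.
From mathcomp Require Import all_boot all_order all_algebra.
From mathcomp Require Import all_classical all_reals all_analysis.
Set Implicit Arguments. Unset Strict Implicit. Unset Printing Implicit Defensive.
Import Order.TTheory GRing.Theory Num.Theory.
Local Open Scope ring_scope.

Definition tft_config (R : realType) (n : nat) : Type :=
  ('I_n -> R) * ('I_n -> 'I_n -> R).

Definition tft_step (R : realType) (n : nat) (v : 'I_n -> R)
  (s : tft_config R n) : tft_config R n :=
  let x := s.1 in
  let y := s.2 in
  (* w i j = amount of good j received by player i *)
  let w := fun i j : 'I_n => y j i * x j in
  let x' := fun i : 'I_n => \sum_(j < n) v j * w i j in
  (x', fun i j : 'I_n => v j * w i j / x' i).

Definition tft_state (R : realType) (n : nat) (v : 'I_n -> R)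
  (x0 : 'I_n -> R) (y0 : 'I_n -> 'I_n -> R) (t : nat) : tft_config R n :=
  iter t (tft_step v) (x0, y0).

Definition tft_x (R : realType) (n : nat) (v : 'I_n -> R)
  (x0 : 'I_n -> R) (y0 : 'I_n -> 'I_n -> R) (t : nat) : 'I_n -> R :=
  (tft_state v x0 y0 t).1.

Definition tft_y (R : realType) (n : nat) (v : 'I_n -> R)
  (x0 : 'I_n -> R) (y0 : 'I_n -> 'I_n -> R) (t : nat) : 'I_n -> 'I_n -> R :=
  (tft_state v x0 y0 t).2.

Definition vstar (R : realType) (n : nat) (v : 'I_n -> R) : R :=
  \big[Num.max/0]_(k < n) v k.

(* Main.v *)
Require Import Defs.
From HB Require Import structures.
From mathcomp Require Import all_boot all_order all_algebra.
From mathcomp Require Import all_classical all_reals all_analysis.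
From mathcomp Require Import ring lra.
Import Order.TTheory GRing.Theory Num.Theory numFieldNormedType.Exports.
Local Open Scope classical_set_scope.
Local Open Scope ring_scope.

Section TFT.
Variables (R : realType) (n : nat) (v : 'I_n -> R)
  (x0 : 'I_n -> R) (y0 : 'I_n -> 'I_n -> R).
Hypotheses (hn : (0 < n)%N) (hv : forall k, 0 < v k) (hx : forall i, 0 < x0 i)
  (hy : forall i j, 0 < y0 i j) (hs : forall i, \sum_(j < n) y0 i j = 1).

Let X t := tft_x v x0 y0 t.
Let Y t := tft_y v x0 y0 t.

Lemma XS t i : X t.+1 i = \sum_(j < n) v j * (Y t j i * X t j).
Proof. by []. Qed.

Lemma YS t i j : Y t.+1 i j = v j * (Y t j i * X t j) / X t.+1 i.
Proof. by []. Qed.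

Lemma inv t : (forall i, 0 < X t i) /\ (forall i j, 0 < Y t i j)
  /\ (forall i, \sum_(j < n) Y t i j = 1).
Proof.
elim: t => [|t [IX [IY IS]]]; first by split=> //.
have Xp : forall i, 0 < X t.+1 i.
  move=> i; rewrite XS (bigD1 (Ordinal hn)) //=.
  apply: ltr_wpDr; first by apply: sumr_ge0 => k _; rewrite ?mulr_ge0 ?ltW.
  by rewrite !mulr_gt0.
split=> //; split.
  by move=> i j; rewrite YS divr_gt0 ?mulr_gt0.
move=> i; under eq_bigr => j _ do rewrite YS.
by rewrite -mulr_suml -XS divff // gt_eqF.
Qed.

Definition a t i j := Y t i j * X t i.

Lemma aS t i j : a t.+1 i j = v j * a t j i.
Proof.
rewrite /a YS divfK; first by [].
by have [H _] := inv t.+1; rewrite gt_eqF.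
Qed.

Lemma aSS t i j : a t.+2 i j = v i * v j * a t i j.
Proof. by rewrite aS aS mulrA (mulrC (v j)). Qed.

End TFT.

Theorem corollary1 (R : realType) (n : nat) (v : 'I_n -> R)
  (x0 : 'I_n -> R) (y0 : 'I_n -> 'I_n -> R) :
  (0 < n)%N ->
  (forall k, 0 < v k) ->
  (forall i, 0 < x0 i) ->
  (forall i j, 0 < y0 i j) ->
  (forall i, \sum_(j < n) y0 i j = 1) ->
  forall i j : 'I_n, v j < vstar v ->
  (fun t : nat => tft_y v x0 y0 t i j) @ \oo --> 0%R.
Proof.
move=> hn hv hx hy hs i j hj.
have [k hk] : exists k, v j < v k.
  apply/existsP; apply: contraLR hj => /existsPn H.
  rewrite -leNgt /vstar; apply: bigmax_le; first exact: ltW.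
  by move=> l _; rewrite leNgt; apply: H.
set Y := tft_y v x0 y0.
have Ypos t l m : 0 < Y t l m by have [_ [H _]] := @inv _ _ _ _ _ hn hv hx hy hs t.
have Xpos t l : 0 < tft_x v x0 y0 t l by have [H _] := @inv _ _ _ _ _ hn hv hx hy hs t.
have apos t l m : 0 < a _ _ v x0 y0 t l m by rewrite /a mulr_gt0.
set q := v j / v k.
set r := fun t => Y t i j / Y t i k.
have rE t : r t = a _ _ v x0 y0 t i j / a _ _ v x0 y0 t i k.
  by rewrite /r /a /Y -mulf_div divff ?mulr1 // gt_eqF.
have rSS t : r t.+2 = q * r t.
  rewrite !rE !(aSS _ _ _ _ _ hn hv hx hy hs) /q; field.
  by rewrite !gt_eqF ?mulr_gt0.
have rM m p : r (m.*2 + p)%N = q ^+ m * r p.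
  elim: m => [|m IH]; first by rewrite mul1r.
  by rewrite doubleS !addSn rSS IH exprS mulrA.
have rge0 t : 0 <= r t by rewrite ltW // divr_gt0.
have q0 : 0 <= q by rewrite ltW // divr_gt0.
have q1 : q < 1 by rewrite /q ltr_pdivrMr // mul1r.
have Yr t : Y t i j <= q ^+ (t./2) * (r 0%N + r 1%N).
  apply: (le_trans (y := r t)).
    rewrite /r ler_pdivlMr //; apply: ler_piMr; first exact: ltW.
    have [_ [_ S]] := @inv _ _ _ _ _ hn hv hx hy hs t.
    rewrite -(S i) (bigD1 k) //= lerDl; apply: sumr_ge0 => l _; exact: ltW.
  rewrite -{1}(odd_double_half t) addnC rM ler_wpM2l ?exprn_ge0 //.
  by case: (odd t); rewrite /= ?lerDl ?lerDr.
apply: (squeeze_cvgr (f := fun _ => 0) (g := fun t => Y t i j) (h := fun t => q ^+ (t./2) * (r 0%N + r 1%N))).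
- by apply: filterE => t; rewrite Yr andbT ltW.
- exact: cvg_cst.
- have H : (fun t => q ^+ t./2) @ \oo --> 0.
    have -> : (fun t => q ^+ t./2) = (fun m => q ^+ m) \o (fun t => (t %/ 2)%N).
      by apply: funext => t; rewrite /= divn2.
    apply: cvg_comp; first exact: cvg_divnr.
    by apply: cvg_expr; rewrite ger0_norm.
  have H2 := cvgMr_tmp (b := r 0%N + r 1%N) H; rewrite mul0r in H2; apply: H2; exact: eventually_filter.
Qed.
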